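(* Let $G$ be a $2$-connected graph with average degree less than $3$ and with at least two vertices of degree $2$. Then $G$ contains an induced subgraph $T$ which is a tree such that every vertex of $T$ has exactly one neighbor in $V(G)\setminus V(T)$.
   Context: All graphs are finite and simple. *)

(* Defs.v *)
From mathcomp Require Import all_boot.
Set Implicit Arguments. Unset Strict Implicit. Unset Printing Implicit Defensive.

(* A finite simple graph: vertex type V : finType, adjacency e : rel V,
   assumed symmetric and irreflexive (hypotheses of the theorem). *)

Definition induced_rel (V : finType) (e : rel V) (S : {set V}) : rel V :=
  [rel x y | [&& e x y, x \in S & y \in S]].

Definition connected_on (V : finType) (e : rel V) (S : {set V}) : Prop :=
  forall x y, x \in S -> y \in S -> connect (induced_rel e S) x y.

Definition has_cycle_on (V : finType) (e : rel V) (S : {set V}) : Prop :=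
  exists s : seq V, [/\ uniq s, 3 <= size s, all (mem S) s & cycle e s].

Definition induced_tree (V : finType) (e : rel V) (S : {set V}) : Prop :=
  [/\ S != set0, connected_on e S & ~ has_cycle_on e S].

Definition deg (V : finType) (e : rel V) (x : V) : nat := #|[set y | e x y]|.

Definition two_connected (V : finType) (e : rel V) : Prop :=
  2 < #|V| /\ forall X : {set V}, #|X| < 2 -> connected_on e (~: X).

(* Main.v *)
Require Import Defs.
From mathcomp Require Import all_boot zify.
Set Implicit Arguments. Unset Strict Implicit. Unset Printing Implicit Defensive.

Section Graph.
Variable V : finType.
Variable e : rel V.
Hypothesis e_sym : symmetric e.
Hypothesis e_irr : irreflexive e.

Lemma induced_sub A : subrel (induced_rel e A) e.
Proof. by move=> x y /andP[]. Qed.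

Lemma induced_sym A : symmetric (induced_rel e A).
Proof. move=> x y; rewrite /induced_rel /= e_sym; by case: (x \in A); case: (y \in A); rewrite ?andbF. Qed.

Lemma csym A : connect_sym (induced_rel e A).
Proof. exact: sym_connect_sym (@induced_sym A). Qed.

Lemma path_in A x p : path (induced_rel e A) x p -> all (mem A) p.
Proof.
elim: p x => [//|y p IH] x /= /andP[/and3P[_ _ yA] hp].
by rewrite yA (IH y hp).
Qed.

Lemma size_small (S : {set V}) (s : seq V) :
  uniq s -> all (mem S) s -> size s <= #|S|.
Proof.
move=> us /allP sS; rewrite -(card_uniqP us).
by apply: subset_leq_card; apply/subsetP => x /sS.
Qed.

Lemma no_cycle_small (S : {set V}) : #|S| <= 2 -> ~ has_cycle_on e S.
Proof.
move=> h [s [us s3 sS _]]; have := size_small us sS; lia.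
Qed.

Lemma tree1 v : induced_tree e [set v].
Proof.
split; first by apply/set0Pn; exists v; rewrite inE.
- by move=> x y; rewrite !inE => /eqP-> /eqP->; apply: connect0.
- by apply: no_cycle_small; rewrite cards1.
Qed.

Lemma tree2 x y : e x y -> induced_tree e [set x; y].
Proof.
move=> exy; split; first by apply/set0Pn; exists x; rewrite !inE eqxx.
- have E : connect (induced_rel e [set x; y]) x y.
    by apply: connect1; rewrite /induced_rel /= exy !inE !eqxx orbT.
  move=> a b; rewrite !inE => /orP[]/eqP-> /orP[]/eqP->; try apply: connect0;
    first exact: E.
  by rewrite csym.
- by apply: no_cycle_small; rewrite cards2; case: (_ != _).
Qed.

Lemma cycle_nbrs (s : seq V) x : uniq s -> 2 < size s -> cycle e s -> x \in s ->
  exists a b, [/\ a != b, a \in s, b \in s, x != a & x != b] /\ e x a /\ e x b.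
Proof.
move=> us s3 cs xs.
have := rot_index xs; set i := index x s; set q := drop _ _ ++ _ => hr.
have us' : uniq (x :: q) by rewrite -hr rot_uniq.
have cs' : cycle e (x :: q) by rewrite -hr rot_cycle.
have ss' : size (x :: q) = size s by rewrite -hr size_rot.
have mq : forall y, y \in x :: q -> y \in s by move=> y; rewrite -hr mem_rot.
case: q hr us' cs' ss' mq => [|a [|b q']] hr us' cs' ss' mq.
- by move: s3; rewrite -ss'.
- by move: s3; rewrite -ss'.
move: cs'; rewrite /= rcons_path => /and3P[exa _ elx].
move: us' => /= /andP[]; rewrite !inE !negb_or => /andP[xa xq] /andP[aq _].
move: elx => /andP[_ elx].
have Lq : last b q' \in b :: q' := mem_last b q'.
have xL : x != last b q'.
  by apply/eqP => h; move: Lq; rewrite -h inE; case/andP: xq => /negbTE-> /negbTE->.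
have aL : a != last b q'.
  by apply/eqP => h; move: Lq; rewrite -h inE; case/andP: aq => /negbTE-> /negbTE->.
exists a, (last b q'); split; last by split=> //; rewrite e_sym.
split=> //.
- by apply: mq; rewrite !inE eqxx orbT.
- by apply: mq; rewrite inE in_cons Lq !orbT.
Qed.

Lemma tree_add_leaf (S : {set V}) x p : induced_tree e S -> x \notin S -> p \in S ->
  e x p -> (forall w, w \in S -> e x w -> w = p) -> induced_tree e (x |: S).
Proof.
move=> [S0 Sc Sa] xS pS exp uniqp; split.
- by apply/set0Pn; exists x; rewrite !inE eqxx.
- have sub : forall a b, connect (induced_rel e S) a b ->
      connect (induced_rel e (x |: S)) a b.
    apply: connect_sub => a b /and3P[eab aS bS]; apply: connect1.
    by rewrite /induced_rel /= eab !inE aS bS !orbT.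
  have xp : connect (induced_rel e (x |: S)) x p.
    by apply: connect1; rewrite /induced_rel /= exp !inE eqxx pS orbT.
  have px : connect (induced_rel e (x |: S)) p x by rewrite csym.
  move=> a b; rewrite !inE => /orP[/eqP->|aS] /orP[/eqP->|bS].
  + exact: connect0.
  + by apply: connect_trans xp (sub _ _ (Sc _ _ pS bS)).
  + by apply: connect_trans (sub _ _ (Sc _ _ aS pS)) px.
  + exact: sub (Sc _ _ aS bS).
- move=> [s [us s3 /allP sS cs]].
  case xs: (x \in s).
  + have [a [b [[ab as_ bs xa xb] [exa exb]]]] := cycle_nbrs us s3 cs xs.
    have aS : a \in S by move: (sS a as_); rewrite !inE eq_sym (negbTE xa).
    have bS : b \in S by move: (sS b bs); rewrite !inE eq_sym (negbTE xb).
    by move: ab; rewrite (uniqp _ aS exa) (uniqp _ bS exb) eqxx.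
  + apply: Sa; exists s; split=> //; apply/allP => y ys.
    move: (sS y ys); rewrite !inE => /orP[/eqP yx|//].
    by move: xs; rewrite -yx ys.
Qed.


Definition degU (U : {set V}) v := #|[set w in U | e v w]|.
Definition outU (U S : {set V}) v := #|[set w in U :\: S | e v w]|.
Definition comp (A : {set V}) a := [set b in A | connect (induced_rel e A) a b].
Definition conn_b (A : {set V}) :=
  [forall x in A, forall y in A, connect (induced_rel e A) x y].

Lemma connP A : reflect (connected_on e A) (conn_b A).
Proof.
apply: (iffP forall_inP) => [h x y xA yA|h x xA].
  by move/forall_inP: (h x xA) => /(_ y yA).
by apply/forall_inP => y yA; apply: h.
Qed.

Lemma has_nbr U x y : connected_on e U -> x \in U -> y \in U -> x != y ->
  exists2 w, w \in U & e x w.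
Proof.
move=> cU xU yU xy; case/connectP: (cU _ _ xU yU) => [[|w p]] /=.
  by move=> _ yx; move: xy; rewrite yx eqxx.
by case/andP => /and3P[exw _ wU] _ _; exists w.
Qed.

Lemma comp_closed A c a b : a \in comp A c -> b \in A -> e a b -> b \in comp A c.
Proof.
rewrite !inE => /andP[aA cab] bA eab; rewrite bA /=.
by apply: connect_trans cab (connect1 _); rewrite /induced_rel /= eab aA bA.
Qed.

Lemma connect_mono (A B : {set V}) x y : A \subset B ->
  connect (induced_rel e A) x y -> connect (induced_rel e B) x y.
Proof.
move=> /subsetP AB; apply: connect_sub => a b /and3P[eab aA bA].
by apply: connect1; rewrite /induced_rel /= eab !AB.
Qed.

Lemma connect_restrict (A B : {set V}) z b : connect (induced_rel e A) z b ->
  (forall v, connect (induced_rel e A) z v -> v \in B) ->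
  connect (induced_rel e (A :&: B)) z b.
Proof.
move=> /connectP[p pp ->] hB.
suff : forall q x, connect (induced_rel e A) z x -> path (induced_rel e A) x q ->
    connect (induced_rel e (A :&: B)) x (last x q) by apply; first exact: connect0.
elim=> [|w q IH] x zx /=; first by move=> _; apply: connect0.
case/andP=> /and3P[exw xA wA] pq.
have zw : connect (induced_rel e A) z w.
  by apply: connect_trans zx (connect1 _); rewrite /induced_rel /= exw xA wA.
apply: connect_trans (IH _ zw pq); apply: connect1.
by rewrite /induced_rel /= exw !inE xA wA (hB _ zx) (hB _ zw).
Qed.

Lemma escape (U W : {set V}) c z : connected_on e U -> c \in U -> c \notin W ->
  (forall w y, w \in W -> y \in U -> y != c -> e w y -> y \in W) ->
  z \in U -> z \notin W -> connect (induced_rel e (U :\: W)) z c.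
Proof.
move=> cU cU' cW clW zU zW; case/connectP: (cU _ _ zU cU') => p pp cl.
elim: p z zU zW pp cl => [|w p IH] z zU zW /= pp cl.
  by rewrite cl; apply: connect0.
case/andP: pp => /and3P[ezw _ wU] pp.
case: (z =P c) => [->|/eqP zc]; first by apply: connect0.
have wW : w \notin W.
  apply/negP => wW.
  by move: zW; rewrite (clW w z wW zU zc _) // e_sym.
apply: connect_trans _ (IH _ wU wW pp cl); apply: connect1.
by rewrite /induced_rel /= ezw !inE zU wU zW wW.
Qed.

Lemma noncut U : connected_on e U -> 1 < #|U| ->
  (exists x, [/\ x \in U, connected_on e (U :\ x) & degU U x <= 1]) \/
  (exists x y, [/\ x \in U, y \in U, e x y, connected_on e (U :\ x)
                 & connected_on e (U :\ y)]).
Proof.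
move=> cU U2.
have [x xU] : exists x, x \in U.
  by apply/set0Pn; rewrite -card_gt0; apply: ltn_trans U2.
case: (boolP [forall c in U, conn_b (U :\ c)]) => [/forall_inP allnc|].
  have [y yU xy] : exists2 y, y \in U & x != y.
    have : 0 < #|U :\ x| by rewrite (cardsD1 x U) xU in U2.
    rewrite card_gt0 => /set0Pn[y]; rewrite !inE => /andP[yx yU].
    by exists y; rewrite // eq_sym.
  have [w wU exw] := has_nbr cU xU yU xy.
  by right; exists x, w; split => //; apply/connP; apply: allnc.
rewrite negb_forall_in => /existsP[c0 /andP[c0U nc0]].
pose P n := [exists c, exists a, [&& c \in U, a \in U :\ c,
   comp (U :\ c) a != U :\ c & #|comp (U :\ c) a| == n]].
have exP : exists n, P n.
  move: nc0; rewrite negb_forall_in => /existsP[a /andP[aU]].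
  rewrite negb_forall_in => /existsP[b /andP[bU nab]].
  exists #|comp (U :\ c0) a|; apply/existsP; exists c0; apply/existsP; exists a.
  rewrite c0U aU eqxx /= andbT; apply/eqP => h.
  by move: (bU); rewrite -h inE bU /= (negbTE nab).
case: (ex_minnP exP) => m /existsP[c /existsP[a /and4P[cU0 aUc Wne /eqP Wm]]] minm.
set W := comp (U :\ c) a in Wne Wm.
have WUc : forall w, w \in W -> w \in U :\ c by move=> w; rewrite inE => /andP[].
have claimA : forall y, y \in W -> connected_on e (U :\ y).
  move=> y yW; apply/connP; apply: contraT => ncy.
  move: (WUc _ yW); rewrite !inE => /andP[yc yU].
  have cUy : c \in U :\ y by rewrite !inE cU0 eq_sym yc.
  move: ncy; rewrite negb_forall_in => /existsP[z1 /andP[z1U]].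
  rewrite negb_forall_in => /existsP[z2 /andP[z2U n12]].
  have [z [zU nzc]] : exists z, z \in U :\ y /\
      ~~ connect (induced_rel e (U :\ y)) z c.
    case h1: (connect (induced_rel e (U :\ y)) z1 c); last by exists z1; rewrite h1.
    case h2: (connect (induced_rel e (U :\ y)) z2 c); last by exists z2; rewrite h2.
    by move: n12; rewrite (connect_trans h1) // csym.
  have zW : z \in W.
    apply: contraT => zW.
    move: (zU); rewrite !inE => /andP[zy zU'].
    have cW : c \notin W by apply/negP => /WUc; rewrite !inE eqxx.
    have clW : forall w y', w \in W -> y' \in U -> y' != c -> e w y' -> y' \in W.
      by move=> w y' wW y'U y'c ewy; apply: comp_closed wW _ ewy; rewrite !inE y'c.
    have h0 := escape cU cU0 cW clW zU' zW.
    have sub : U :\: W \subset U :\ y.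
      apply/subsetP => v; rewrite in_setD in_setD1 => /andP[vW ->]; rewrite andbT.
      by apply/eqP => vy; move: vW; rewrite vy yW.
    by move: nzc; rewrite (connect_mono sub h0).
  set Y := comp (U :\ y) z.
  have PY : P #|Y|.
    apply/existsP; exists y; apply/existsP; exists z.
    rewrite yU zU eqxx /= andbT; apply/eqP => h.
    by move: cUy; rewrite -h inE (negbTE nzc) andbF.
  have YW : Y \subset W :\ y.
    apply/subsetP => b; rewrite inE => /andP[bUy zb].
    have hB : forall v, connect (induced_rel e (U :\ y)) z v -> v \in [set v | v != c].
      by move=> v zv; rewrite inE; apply: contraNneq nzc => <-.
    have zb' := connect_restrict zb hB.
    have zbc : connect (induced_rel e (U :\ c)) z b.
      apply: connect_mono zb'; apply/subsetP => v; rewrite !inE.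
      by case/andP => /andP[_ ->] ->.
    move: bUy; rewrite !inE => /andP[-> bU]; rewrite bU /=.
    have bc : b != c by have := hB _ zb; rewrite inE.
    rewrite bc /=; move: zW; rewrite inE => /andP[_ az].
    exact: connect_trans az zbc.
  have := minm _ PY; have := subset_leq_card YW.
  have := cardsD1 y W; rewrite yW Wm /=; move: #|Y| #|W :\ y| => j k h1 h2 h3.
  clear -h1 h2 h3; lia.
have aW : a \in W by rewrite inE aUc; apply: connect0.
move: aUc; rewrite !inE => /andP[ac aU].
case: (leqP (degU U a) 1) => da.
  by left; exists a; split => //; apply: claimA.
have : 0 < #|[set w in U | e a w] :\ c|.
  move: da; rewrite /degU (cardsD1 c); case: (c \in _) => /=;
  move: #|_ :\ c| => k h; clear -h; lia.
rewrite card_gt0 => /set0Pn[b]; rewrite !inE => /andP[bc /andP[bU eab]].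
right; exists a, b; split => //; try apply: claimA => //.
by apply: comp_closed aW _ eab; rewrite !inE bc.
Qed.

Lemma outU_del (U S : {set V}) u v : u \in U -> u \notin S ->
  outU U S v = outU (U :\ u) S v + e v u.
Proof.
move=> uU uS; rewrite /outU (cardsD1 u) !inE uS uU /= addnC; congr (_ + _).
by apply: eq_card => w; rewrite !inE; case: (w == u); rewrite ?andbF.
Qed.

Lemma degU_out (U : {set V}) v : degU U v = outU U set0 v.
Proof. by rewrite /degU /outU setD0. Qed.

Lemma degU_del (U : {set V}) u v : u \in U ->
  degU U v = degU (U :\ u) v + e v u.
Proof. by move=> uU; rewrite !degU_out (@outU_del U set0 u v uU) ?inE. Qed.

Lemma out_le_deg (U S : {set V}) v : outU U S v <= degU U v.
Proof.
apply: subset_leq_card; apply/subsetP => w; rewrite !inE.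
by case/andP => /andP[_ ->] ->.
Qed.

Lemma out_lt_deg (U S : {set V}) v w : w \in U -> w \in S -> e v w -> outU U S v < degU U v.
Proof.
move=> wU wS evw; rewrite /degU (cardsD1 w) !inE wU evw /= add1n ltnS.
apply: subset_leq_card; apply/subsetP => x; rewrite !inE.
case/andP => /andP[xS ->] ->; rewrite !andbT.
by apply/eqP => xw; move: xS; rewrite xw wS.
Qed.

Lemma sum_bool_card (A : {set V}) (P : pred V) :
  \sum_(v in A) (P v : nat) = #|[set v in A | P v]|.
Proof.
rewrite -sum1dep_card big_mkcondr /=; apply: eq_bigr => v _.
by case: (P v).
Qed.

Lemma sum_deg_del (U : {set V}) u : u \in U ->
  \sum_(v in U) degU U v = \sum_(v in U :\ u) degU (U :\ u) v + 2 * degU U u.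
Proof.
move=> uU; rewrite (big_setD1 u uU) /=.
rewrite (eq_bigr (fun v => degU (U :\ u) v + e v u)); last first.
  by move=> v _; apply: degU_del.
rewrite big_split /= sum_bool_card.
have -> : #|[set v in U :\ u | e v u]| = degU U u.
  apply: eq_card => w; rewrite !inE e_sym.
  by case: (w =P u) => [->|]; rewrite ?e_irr ?andbF.
by rewrite mul2n -addnn; move: (\sum_(i in _) _) (degU U u) => a b; clear; lia.
Qed.

Lemma outU_sub (U S : {set V}) x v : x \notin S ->
  outU U (x |: S) v = outU (U :\ x) S v.
Proof.
move=> xS; apply: eq_card => w; rewrite !inE.
by case: (w =P x) => [->|]; rewrite ?(negbTE xS) /= ?andbF.
Qed.

Lemma lemQ n : forall (U : {set V}) (t : V -> nat), #|U| <= n -> U != set0 ->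
  connected_on e U ->
  2 + \sum_(v in U) degU U v <= #|U| + \sum_(v in U) t v ->
  exists S : {set V}, [/\ S \subset U, induced_tree e S &
                         forall v, v \in S -> outU U S v < t v].
Proof.
elim: n => [|n IH] U t Un U0 cU hsum.
  by move: Un; rewrite leqn0 cards_eq0 (negbTE U0).
case: (boolP [exists v in U, degU U v < t v]) => [/existsP[v /andP[vU dv]]|h1].
  exists [set v]; split; first by rewrite sub1set.
  - exact: tree1.
  - by move=> w; rewrite inE => /eqP->; apply: leq_ltn_trans (out_le_deg _ _ _) dv.
have tle : forall v, v \in U -> t v <= degU U v.
  by move=> v vU; move: h1; rewrite negb_exists_in => /forall_inP/(_ v vU); rewrite -leqNgt.
have U2 : 1 < #|U|.
  have : \sum_(v in U) t v <= \sum_(v in U) degU U v by apply: leq_sum.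
  by move: hsum; move: (\sum_(v in U) _) (\sum_(v in U) _) => a b h h'; clear -h h'; lia.
case: (boolP [exists u in U, conn_b (U :\ u) && (t u < degU U u)]).
  case/existsP => u /andP[uU /andP[/connP cu tu]].
  pose t' v := t v - e v u.
  have n1 : #|U :\ u| <= n by move: Un; rewrite (cardsD1 u U) uU add1n ltnS.
  have ne : U :\ u != set0.
    by rewrite -card_gt0; move: U2; rewrite (cardsD1 u U) uU add1n ltnS.
  have hs : 2 + \sum_(v in U :\ u) degU (U :\ u) v <=
            #|U :\ u| + \sum_(v in U :\ u) t' v.
    have h2 := sum_deg_del uU.
    have h3 : \sum_(v in U) t v = t u + \sum_(v in U :\ u) t v by rewrite (big_setD1 u uU).
    have h4 : \sum_(v in U :\ u) t v <= \sum_(v in U :\ u) t' v + degU U u.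
      have -> : degU U u = \sum_(v in U :\ u) (e v u : nat).
        rewrite sum_bool_card; apply: eq_card => w; rewrite !inE e_sym.
        by case: (w =P u) => [->|]; rewrite ?e_irr ?andbF.
      rewrite -big_split /=; apply: leq_sum => v _; rewrite /t'.
      by move: (t v) (e v u : nat) => a b; clear; lia.
    have h5 : #|U| = 1 + #|U :\ u| by rewrite (cardsD1 u U) uU.
    move: hsum h2 h3 h4 h5 tu; move: (\sum_(v in U) degU U v) (\sum_(v in U) t v)
      (\sum_(v in U :\ u) degU (U :\ u) v) (\sum_(v in U :\ u) t v)
      (\sum_(v in U :\ u) t' v) (degU U u) #|U| #|U :\ u| (t u).
    by move=> a b c d f g h i j; clear; lia.
  have [S [SU St Sout]] := IH _ t' n1 ne cu hs.
  exists S; split => //.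
  - by apply: subset_trans SU _; apply: subsetDl.
  - move=> v vS; have uS : u \notin S.
      by apply/negP => /(subsetP SU); rewrite !inE eqxx.
    rewrite (outU_del _ uU uS); have := Sout v vS; rewrite /t'.
    by move: (outU _ _ _) (t v) (e v u : nat) => a b c; clear; lia.
rewrite negb_exists_in => /forall_inP h2.
have teq : forall u, u \in U -> connected_on e (U :\ u) -> degU U u <= t u.
  by move=> u uU /connP cu; move: (h2 u uU); rewrite cu /= -leqNgt.
case: (noncut cU U2) => [[x [xU cx dx]] | [x [y [xU yU exy cx cy]]]].
  have [y yU xy] : exists2 y, y \in U & x != y.
    have : 0 < #|U :\ x| by move: U2; rewrite (cardsD1 x U) xU.
    rewrite card_gt0 => /set0Pn[y]; rewrite !inE => /andP[yx yU].
    by exists y; rewrite // eq_sym.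
  have [w wU exw] := has_nbr cU xU yU xy.
  have d1 : degU U x = 1.
    apply/eqP; rewrite eqn_leq dx /= card_gt0; apply/set0Pn; exists w.
    by rewrite inE wU exw.
  have [p Np] : exists p, [set w in U | e x w] = [set p].
    by apply/cards1P; rewrite -/(degU U x) d1.
  have pU : p \in U by have := set11 p; rewrite -Np inE => /andP[].
  have exp : e x p by have := set11 p; rewrite -Np inE => /andP[].
  have uniqp : forall w, w \in U -> e x w -> w = p.
    by move=> w' w'U exw'; apply/set1P; rewrite -Np inE w'U exw'.
  have tx : t x = 1 by apply/eqP; rewrite eqn_leq -{1}d1 tle //= -d1 teq.
  have n1 : #|U :\ x| <= n by move: Un; rewrite (cardsD1 x U) xU add1n ltnS.
  have ne : U :\ x != set0.
    by rewrite -card_gt0; move: U2; rewrite (cardsD1 x U) xU add1n ltnS.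
  have hs : 2 + \sum_(v in U :\ x) degU (U :\ x) v <=
            #|U :\ x| + \sum_(v in U :\ x) t v.
    have h2' := sum_deg_del xU.
    have h3 : \sum_(v in U) t v = t x + \sum_(v in U :\ x) t v by rewrite (big_setD1 x xU).
    have h5 : #|U| = 1 + #|U :\ x| by rewrite (cardsD1 x U) xU.
    move: hsum h2' h3 h5 tx d1; move: (\sum_(v in U) degU U v) (\sum_(v in U) t v)
      (\sum_(v in U :\ x) degU (U :\ x) v) (\sum_(v in U :\ x) t v)
      (degU U x) #|U| #|U :\ x| (t x).
    by move=> a b c d g h i j; clear; lia.
  have [S [SU St Sout]] := IH _ t n1 ne cx hs.
  have xS : x \notin S by apply/negP => /(subsetP SU); rewrite !inE eqxx.
  case pS: (p \in S).
    exists (x |: S); split.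
    - by rewrite subUset sub1set xU; apply: subset_trans SU (subsetDl _ _).
    - apply: tree_add_leaf St xS pS exp _.
      by move=> w' /(subsetP SU); rewrite !inE => /andP[_ w'U]; apply: uniqp.
    - move=> v; rewrite in_setU1 => /orP[/eqP->|vS].
        rewrite tx ltnS leqn0 cards_eq0; apply/eqP/setP => w'; rewrite !inE.
        apply/negbTE; apply/negP => /andP[/andP[/norP[_ w'S] w'U] exw'].
        by move: w'S; rewrite (uniqp _ w'U exw') pS.
      by rewrite outU_sub //; apply: Sout.
  exists S; split => //.
  - by apply: subset_trans SU (subsetDl _ _).
  - move=> v vS; rewrite (outU_del _ xU xS).
    have -> : e v x = false.
      apply/negbTE/negP; rewrite e_sym => /(uniqp v).
      have vU : v \in U by move: (subsetP SU v vS); rewrite inE => /andP[].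
      by move/(_ vU) => vp; move: pS; rewrite -vp vS.
    by rewrite addn0; apply: Sout.
exists [set x; y]; split.
- by rewrite subUset !sub1set xU yU.
- exact: tree2.
- move=> v; rewrite !inE => /orP[]/eqP->.
  + apply: leq_trans (teq _ xU cx); apply: (out_lt_deg (w := y)) => //.
    by rewrite !inE eqxx orbT.
  + apply: leq_trans (teq _ yU cy); apply: (out_lt_deg (w := x)) => //.
    * by rewrite !inE eqxx.
    * by rewrite e_sym.
Qed.

Definition outV (S : {set V}) v := #|[set y | e v y & y \notin S]|.

Lemma refine n : forall S : {set V}, #|S| <= n -> induced_tree e S ->
  (forall v, exists w, e v w) ->
  (forall v, v \in S -> outV S v <= 1) ->
  exists T : {set V}, induced_tree e T /\ forall v, v \in T -> outV T v = 1.
Proof.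
elim: n => [|n IH] S Sn [S0 Sc Sa] nbr Sout.
  by move: Sn; rewrite leqn0 cards_eq0 (negbTE S0).
case: (boolP [forall v in S, outV S v == 1]) => [/forall_inP h|].
  by exists S; split => // v vS; apply/eqP; apply: h.
rewrite negb_forall_in => /existsP[z /andP[zS zo]].
have z0 : outV S z = 0 by move: (Sout z zS) zo; case: (outV S z) => [|[]].
have [y ezy] := nbr z.
have yS : y \in S.
  apply: contraT => yS; move: z0; rewrite /outV => /eqP; rewrite cards_eq0.
  by move/eqP/setP/(_ y); rewrite !inE ezy yS.
have yz : y != z by apply/eqP => yz; move: ezy; rewrite yz e_irr.
set Y := comp (S :\ z) y.
set S' := S :\: Y.
have yY : y \in Y by rewrite inE !inE yz yS; apply: connect0.
have zS' : z \in S' by rewrite !inE eqxx /= zS.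
have YS : forall w, w \in Y -> w \in S :\ z by move=> w; rewrite inE => /andP[].
have f4 : forall v w, v \in S' -> v != z -> e v w -> w \notin Y.
  move=> v w; rewrite in_setD => /andP[vY vS] vz evw; apply/negP => wY.
  have vSz : v \in S :\ z by rewrite !inE vz vS.
  have := comp_closed wY vSz; rewrite e_sym evw => /(_ isT) vY'.
  by move: vY; rewrite vY'.
have f5 : #|[set w in Y | e z w]| <= 1.
  rewrite leqNgt; apply/negP => two.
  have [y1 y1A] : exists y1, y1 \in [set w in Y | e z w].
    by apply/set0Pn; rewrite -card_gt0; apply: ltn_trans two.
  have : 0 < #|[set w in Y | e z w] :\ y1|.
    by move: two; rewrite (cardsD1 y1) y1A; move: #|_ :\ y1| => k h; clear -h; lia.
  rewrite card_gt0 => /set0Pn[y2]; rewrite !inE => /andP[y21 /andP[y2Y ezy2]].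
  move: y1A; rewrite inE => /andP[y1Y ezy1].
  have c12 : connect (induced_rel e (S :\ z)) y1 y2.
    move: y1Y y2Y; rewrite !inE => /andP[_ c1] /andP[_ c2].
    by apply: connect_trans _ c2; rewrite csym.
  have y1Sz := YS _ y1Y.
  move: y21 ezy2; case/connectP: c12 => p pp ->.
  case: (shortenP pp) => p' pp' up' _ y21 ezy2.
  apply: Sa; exists [:: z, y1 & p']; split.
  - apply/andP; split; last exact: up'; rewrite inE negb_or; apply/andP; split.
      by apply/eqP => zy1; move: y1Sz; rewrite -zy1 !inE eqxx.
    apply/negP => zp; have := path_in pp'; move/allP/(_ z zp).
    by rewrite !inE eqxx.
  - by case: p' pp' up' y21 ezy2 => [|a p'] /=; rewrite ?eqxx.
  - rewrite /= zS; move: y1Sz; rewrite !inE => /andP[_ ->] /=.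
    apply/allP => w wp; have := path_in pp'; move/allP/(_ w wp).
    by rewrite !inE => /andP[].
  - rewrite /= rcons_path ezy1 (sub_path (@induced_sub _) pp') /=.
    by rewrite e_sym.
have Sc' : connected_on e S'.
  have walk : forall p v, v \in S' -> path (induced_rel e S) v p ->
      last v p = z -> connect (induced_rel e S') v z.
    elim=> [|w p IHp] v vS' /=; first by move=> _ ->; apply: connect0.
    case/andP => /and3P[evw vS wS] pp lz.
    case: (v =P z) => [->|/eqP vz]; first by apply: connect0.
    have wS' : w \in S' by rewrite in_setD wS andbT; exact: f4 vS' vz evw.
    apply: connect_trans _ (IHp _ wS' pp lz); apply: connect1.
    by rewrite /induced_rel /= evw vS' wS'.
  have toz : forall v, v \in S' -> connect (induced_rel e S') v z.
    move=> v vS'; have vS : v \in S by move: vS'; rewrite inE => /andP[].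
    by case/connectP: (Sc _ _ vS zS) => p pp lz; apply: walk vS' pp (esym lz).
  move=> a b aS' bS'; apply: connect_trans (toz _ aS') _.
  by rewrite csym; apply: toz.
have St' : induced_tree e S'.
  split; first by apply/set0Pn; exists z.
  - exact: Sc'.
  - move=> [s [us s3 sS cs]]; apply: Sa; exists s; split => //.
    by apply/allP => w ws; move/allP: sS => /(_ w ws) /setDP[].
have n' : #|S'| <= n.
  have : #|S'| <= #|S :\ y|.
    apply: subset_leq_card; apply/subsetP => w /setDP[wS wY].
    by rewrite in_setD1 wS andbT; apply/eqP => wy; move: wY; rewrite wy yY.
  move: Sn; rewrite (cardsD1 y S) yS; move: #|S'| #|S :\ y| => a b h h'.
  clear -h h'; lia.
apply: (IH S' n' St' nbr) => v vS'.
have vS : v \in S by move: vS'; rewrite inE => /andP[].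
case: (v =P z) => [->|/eqP vz].
  apply: leq_trans _ f5; apply: subset_leq_card; apply/subsetP => w.
  rewrite !inE => /andP[ezw]; rewrite negb_and negbK => /orP[wY|wS].
    by rewrite wY.
  move: z0; rewrite /outV => /eqP; rewrite cards_eq0 => /eqP/setP/(_ w).
  by rewrite !inE ezw wS.
apply: leq_trans (Sout v vS); apply: subset_leq_card; apply/subsetP => w.
rewrite !inE => /andP[evw]; rewrite negb_and negbK => /orP[wY|wS].
  by move: (f4 v w vS' vz evw); rewrite !inE wY.
by rewrite evw wS.
Qed.

Lemma outV_setT (S : {set V}) v : outV S v = outU [set: V] S v.
Proof. by apply: eq_card => w; rewrite !inE; case: (e v w); case: (w \in S). Qed.

Lemma degU_setT v : degU [set: V] v = deg e v.
Proof. by apply: eq_card => w; rewrite !inE. Qed.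

Lemma sum_setT (F : V -> nat) : \sum_(v in [set: V]) F v = \sum_v F v.
Proof. by apply: eq_bigl => v; rewrite in_setT. Qed.

End Graph.

Unset Implicit Arguments.
Set Strict Implicit.

Theorem mainTheorem9 (V : finType) (e : rel V)
  (e_sym : symmetric e) (e_irr : irreflexive e) :
  two_connected e ->
  \sum_(x : V) deg e x < 3 * #|V| ->
  2 <= #|[set x : V | deg e x == 2]| ->
  exists S : {set V},
    induced_tree e S /\
    forall x, x \in S -> #|[set y : V | e x y & y \notin S]| = 1.
Proof.
move=> [n2 tc] hsum hd2.
have cV : connected_on e [set: V].
  by have := tc set0; rewrite cards0 setC0 => /(_ isT).
have nbr : forall v, exists w, e v w.
  move=> v; have [y yv] : exists y, y != v.
    have : 0 < #|[set: V] :\ v|.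
      have := cardsD1 v [set: V]; rewrite in_setT cardsT.
      by move: #|[set: V] :\ v| => k h; clear -h n2; lia.
    by rewrite card_gt0 => /set0Pn[y]; rewrite !inE => /andP[yv _]; exists y.
  have [w _ evw] := has_nbr cV (in_setT v) (in_setT y) (negbT (introF eqP (fun h => (negP yv) (introT eqP (esym h))))).
  by exists w.
have VT : [set: V] != set0 by rewrite -card_gt0 cardsT; lia.
have [S [St Sout]] : exists S, induced_tree e S /\
    forall v, v \in S -> outV e S v <= 1.
  set Sg := \sum_(x : V) deg e x in hsum.
  have sdeg : \sum_(v in [set: V]) degU e [set: V] v = Sg.
    by rewrite sum_setT; apply: eq_bigr => v _; rewrite degU_setT.
  case: (leqP (Sg + 2) (3 * #|V|)) => h.
    have hs : 2 + \sum_(v in [set: V]) degU e [set: V] v <=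
              #|[set: V]| + \sum_(v in [set: V]) (fun _ => 2) v.
      by rewrite sdeg sum_nat_const cardsT; clear -h; lia.
    have [S [_ St Sout]] := lemQ e_sym e_irr (leqnn _) VT cV hs.
    exists S; split => // v vS; rewrite outV_setT.
    by have := Sout v vS; clear; lia.
  have [c dc] : exists c, 4 <= deg e c.
    apply/existsP; apply: contraT; rewrite negb_exists => /forallP hc.
    have : Sg + #|[set x : V | deg e x == 2]| <= 3 * #|V|.
      have h1 : #|[set x | deg e x == 2]| = \sum_(v in [set: V]) (deg e v == 2 : nat).
        by rewrite sum_bool_card; apply: eq_card => w; rewrite !inE.
      have h2 : 3 * #|V| = \sum_(v in [set: V]) 3 by rewrite sum_nat_const cardsT mulnC.
      rewrite h1 h2 /Sg -sum_setT -big_split /=; apply: leq_sum => v _.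
      move: (hc v); rewrite -ltnNge ltnS => hd.
      by case: eqP => [->|_] //; rewrite addn0.
    by move: hd2 h hsum; clear; lia.
  set U := [set: V] :\ c.
  pose t v := 2 - e v c.
  have cU : connected_on e U.
    by rewrite /U setTD; apply: tc; rewrite cards1.
  have cT : c \in [set: V] := in_setT c.
  have hU : #|[set: V]| = 1 + #|U| by rewrite (cardsD1 c) cT.
  have U0 : U != set0 by rewrite -card_gt0; move: hU; rewrite cardsT; clear -n2; lia.
  have hdel := sum_deg_del e_sym e_irr cT.
  have dcT : degU e [set: V] c = deg e c by rewrite degU_setT.
  have ht : \sum_(v in U) t v + deg e c = 2 * #|U|.
    have -> : deg e c = \sum_(v in U) (e v c : nat).
      rewrite sum_bool_card -dcT; apply: eq_card => w; rewrite !inE e_sym.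
      by case: (w =P c) => [->|]; rewrite ?e_irr ?andbF.
    rewrite -big_split /= mulnC -sum_nat_const; apply: eq_bigr => v _.
    by rewrite /t; case: (e v c).
  have hs : 2 + \sum_(v in U) degU e U v <= #|U| + \sum_(v in U) t v.
    move: hdel ht hU; rewrite sdeg dcT cardsT.
    move: (\sum_(v in U) degU e U v) (\sum_(v in U) t v) #|U| => a b k.
    by clear -h hsum dc; lia.
  have [S [SU St Sout]] := lemQ e_sym e_irr (leqnn _) U0 cU hs.
  exists S; split => // v vS.
  have cS : c \notin S by apply/negP => /(subsetP SU); rewrite !inE eqxx.
  rewrite outV_setT (@outU_del _ e [set: V] S c v cT cS); have := Sout v vS; rewrite /t.
  by move: (outU e U S v) (e v c : nat) => a b; clear; lia.
have [T [Tt Tout]] := refine e_sym e_irr (leqnn _) St nbr Sout.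
by exists T.
Qed.
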